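(* Let $\mathsf{Ax}\subseteq\{\mathsf{N}_\Diamond,\mathsf{C}_\Diamond,\mathsf{I}_{\Diamond\Box}\}$. Then $\mathsf{CK}\oplus\mathsf{Ax}$ is sound and strongly complete with respect to the class $\mathcal{F}$ of $\mathsf{CK}$-frames satisfying ($\mathsf{A}$-corr) for each $\mathsf{A}\in\mathsf{Ax}$, i.e. $\Gamma\vdash_{\mathsf{Ax}}\varphi$ iff $\Gamma\Vdash_{\mathcal{F}}\varphi$ for all $\Gamma\subseteq\mathbf{L}$, $\varphi\in\mathbf{L}$.
   Context: Formulas: $\mathbf{L}$ is generated from a countably infinite set of propositional variables by $\varphi ::= p \mid \bot \mid \varphi\wedge\varphi \mid \varphi\vee\varphi \mid \varphi\to\varphi \mid \Box\varphi \mid \Diamond\varphi$. Axioms: $\mathsf{K}_\Box$: $\Box(\varphi\to\psi)\to(\Box\varphi\to\Box\psi)$; $\mathsf{K}_\Diamond$: $\Box(\varphi\to\psi)\to(\Diamond\varphi\to\Diamond\psi)$; $\mathsf{N}_\Diamond$: $\Diamond\bot\to\bot$; $\mathsf{C}_\Diamond$: $\Diamond(\varphi\vee\psi)\to\Diamond\varphi\vee\Diamond\psi$; $\mathsf{I}_{\Diamond\Box}$: $(\Diamond\varphi\to\Box\psi)\to\Box(\varphi\to\psi)$. For a set $\mathsf{Ax}$ of axioms, $\mathsf{CK}\oplus\mathsf{Ax}$ is the relation $\Gamma\vdash_{\mathsf{Ax}}\varphi$ inductively generated by: (Ax) $\Gamma\vdash\varphi$ whenever $\varphi$ is a substitution instance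 of an axiom of a standard Hilbert axiomatisation of intuitionistic propositional logic, of $\mathsf{K}_\Box$, of $\mathsf{K}_\Diamond$, or of an element of $\mathsf{Ax}$; (El) $\Gamma\vdash\varphi$ if $\varphi\in\Gamma$; (MP) from $\Gamma\vdash\varphi$ and $\Gamma\vdash\varphi\to\psi$ infer $\Gamma\vdash\psi$; (Nec) from $\emptyset\vdash\varphi$ infer $\Gamma\vdash\Box\varphi$. A $\mathsf{CK}$-frame is a tuple $(X,e,\le,R)$ where $(X,\le)$ is a preorder, $e\in X$ is a maximal element of $(X,\le)$, and $R$ is a binary relation on $X$ with $eRx$ iff $x=e$. A valuation assigns to each variable $p$ an upset $V(p)$ with $e\in V(p)$. Forcing: $x\Vdash p$ iff $x\in V(p)$; $x\Vdash\bot$ iff $x=e$; $\wedge,\vee$ pointwise; $x\Vdash\varphi\to\psi$ iff for all $y\ge x$, $y\Vdash\varphi$ implies $y\Vdash\psi$; $x\Vdash\Box\varphi$ iff for all $y,z$ with $x\le y$ and $yRz$, $z\Vdash\varphi$; $x\Vdash\Diamond\varphi$ iff for all $y\ge x$ there is $z$ with $yRz$ and $z\Vdash\varphi$. For a class $\mathcal{F}$ of frames, $\Gamma\Vdash_{\mathcal{F}}\varphi$ means: for every frame in $\mathcal{F}$, every valuation and every world $x$, if $x$ forces all of $\Gamma$ then $x\Vdash\varphi$. Notation: $R[x]=\{y\mid xRy\}$, $R^{-1}(x)=\{y\mid yRx\}$, ${\downarrow}a=\{x\mid x\le y\text{ for some }y\in a\}$. Frame conditions: ($\mathsf{N}_\Diamond$-corr)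 for all $x$, if $yRe$ for all $y\ge x$ then $x=e$. ($\mathsf{C}_\Diamond$-corr) for all $x,y,z$, if $y,z\notin R^{-1}(e)$, $x\le y$ and $x\le z$, then there is $w\ge x$ with $R[w]\subseteq{\downarrow}R[y]$ and $R[w]\subseteq{\downarrow}R[z]$. ($\mathsf{I}_{\Diamond\Box}$-corr) for all $x,y,z$, if $xRy$, $y\le z$ and $z\ne e$, then there are $u,w$ with $x\le u$, $uRw$, $w\le z$ such that for every $s\ge u$, either $sRe$ or there is $t$ with $sRt$ and $z\le t$. *)

(* Defs.v *)
Inductive form : Type :=
| Var : nat -> form
| Bot : form
| And : form -> form -> form
| Or  : form -> form -> form
| Imp : form -> form -> form
| Box : form -> form
| Dia : form -> form.

Inductive axname : Type := AxN | AxC | AxI.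

Definition ax_instance (a : axname) (f : form) : Prop :=
  match a with
  | AxN => f = Imp (Dia Bot) Bot
  | AxC => exists p q, f = Imp (Dia (Or p q)) (Or (Dia p) (Dia q))
  | AxI => exists p q, f = Imp (Imp (Dia p) (Box q)) (Box (Imp p q))
  end.

Inductive base_axiom : form -> Prop :=
| IPC1 p q : base_axiom (Imp p (Imp q p))
| IPC2 p q r : base_axiom (Imp (Imp p (Imp q r)) (Imp (Imp p q) (Imp p r)))
| IPC3 p q : base_axiom (Imp (And p q) p)
| IPC4 p q : base_axiom (Imp (And p q) q)
| IPC5 p q : base_axiom (Imp p (Imp q (And p q)))
| IPC6 p q : base_axiom (Imp p (Or p q))
| IPC7 p q : base_axiom (Imp q (Or p q))
| IPC8 p q r : base_axiom (Imp (Imp p r) (Imp (Imp q r) (Imp (Or p q) r)))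
| IPC9 p : base_axiom (Imp Bot p)
| KBox p q : base_axiom (Imp (Box (Imp p q)) (Imp (Box p) (Box q)))
| KDia p q : base_axiom (Imp (Box (Imp p q)) (Imp (Dia p) (Dia q))).

Inductive derives (Ax : axname -> Prop) : (form -> Prop) -> form -> Prop :=
| d_base Gamma f : base_axiom f -> derives Ax Gamma f
| d_ax Gamma a f : Ax a -> ax_instance a f -> derives Ax Gamma f
| d_el (Gamma : form -> Prop) f : Gamma f -> derives Ax Gamma f
| d_mp Gamma f g : derives Ax Gamma f -> derives Ax Gamma (Imp f g) ->
    derives Ax Gamma g
| d_nec Gamma f : derives Ax (fun _ => False) f -> derives Ax Gamma (Box f).

Record frame : Type := Frame {
  W : Type;
  le : W -> W -> Prop;
  e : W;
  R : W -> W -> Prop;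
  le_refl : forall x, le x x;
  le_trans : forall x y z, le x y -> le y z -> le x z;
  e_max : forall y, le e y -> y = e;
  R_e : forall x, R e x <-> x = e
}.

Record valuation (F : frame) : Type := Valuation {
  val : nat -> W F -> Prop;
  val_up : forall p x y, le F x y -> val p x -> val p y;
  val_e : forall p, val p (e F)
}.

Fixpoint forces (F : frame) (V : valuation F) (x : W F) (f : form) : Prop :=
  match f with
  | Var p => val F V p x
  | Bot => x = e F
  | And f g => forces F V x f /\ forces F V x g
  | Or f g => forces F V x f \/ forces F V x g
  | Imp f g => forall y, le F x y -> forces F V y f -> forces F V y g
  | Box f => forall y z, le F x y -> R F y z -> forces F V z f
  | Dia f => forall y, le F x y -> exists z, R F y z /\ forces F V z f
  end.

Definition N_corr (F : frame) : Prop :=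
  forall x, (forall y, le F x y -> R F y (e F)) -> x = e F.

Definition R_sub_down (F : frame) (w y : W F) : Prop :=
  forall v, R F w v -> exists t, R F y t /\ le F v t.

Definition C_corr (F : frame) : Prop :=
  forall x y z, ~ R F y (e F) -> ~ R F z (e F) -> le F x y -> le F x z ->
    exists w, le F x w /\ R_sub_down F w y /\ R_sub_down F w z.

Definition I_corr (F : frame) : Prop :=
  forall x y z, R F x y -> le F y z -> z <> e F ->
    exists u w, le F x u /\ R F u w /\ le F w z /\
      forall s, le F u s -> R F s (e F) \/ exists t, R F s t /\ le F z t.

Definition corr (a : axname) : frame -> Prop :=
  match a with AxN => N_corr | AxC => C_corr | AxI => I_corr end.

Definition frame_class (Ax : axname -> Prop) (F : frame) : Prop :=
  forall a, Ax a -> corr a F.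

Definition sem_cons (K : frame -> Prop) (Gamma : form -> Prop) (f : form) : Prop :=
  forall (F : frame) (V : valuation F) (x : W F),
    K F -> (forall g, Gamma g -> forces F V x g) -> forces F V x f.

(* Main.v *)
Require Import Defs.
From Stdlib Require Import List Classical ClassicalEpsilon Lia Cantor.
Import ListNotations.

Section Hilbert.
Variable Ax : axname -> Prop.

Definition empty : form -> Prop := fun _ => False.
Definition ext (G : form -> Prop) (a : form) : form -> Prop := fun x => G x \/ x = a.
Definition inl (l : list form) : form -> Prop := fun x => In x l.

Lemma d_weak G f : derives Ax G f -> forall G', (forall x, G x -> G' x) -> derives Ax G' f.
Proof.
  induction 1; intros G' HG.
  - now apply d_base.
  - eapply d_ax; eauto.
  - apply d_el; auto.
  - eapply d_mp; eauto.
  - now apply d_nec.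
Qed.

Lemma d_thm G f : derives Ax empty f -> derives Ax G f.
Proof. intros H; eapply d_weak; [exact H|]; intros x [] . Qed.

Lemma d_mp' G f g : derives Ax G (Imp f g) -> derives Ax G f -> derives Ax G g.
Proof. intros; eapply d_mp; eauto. Qed.

Lemma d_K G a f : derives Ax G f -> derives Ax G (Imp a f).
Proof. intros H; eapply d_mp; [exact H| apply d_base, IPC1]. Qed.

Lemma d_id G a : derives Ax G (Imp a a).
Proof.
  apply (d_mp' _ (Imp a (Imp a a))).
  - apply (d_mp' _ (Imp a (Imp (Imp a a) a))).
    + apply d_base, IPC2.
    + apply d_base, IPC1.
  - apply d_base, IPC1.
Qed.

Lemma deduction G a b : derives Ax (ext G a) b -> derives Ax G (Imp a b).
Proof.
  intros H. remember (ext G a) as G0 eqn:E. revert G E.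
  induction H; intros G' E; subst.
  - apply d_K, d_base; auto.
  - apply d_K; eapply d_ax; eauto.
  - destruct H as [H|H].
    + apply d_K, d_el; auto.
    + subst; apply d_id.
  - specialize (IHderives1 G' eq_refl). specialize (IHderives2 G' eq_refl).
    eapply d_mp'; [eapply d_mp'; [apply d_base, IPC2|exact IHderives2]|exact IHderives1].
  - apply d_K, d_nec; auto.
Qed.

Lemma cut G a b : derives Ax G a -> derives Ax (ext G a) b -> derives Ax G b.
Proof. intros H1 H2; eapply d_mp'; [apply deduction; exact H2|exact H1]. Qed.

Lemma d_hyp G a : derives Ax (ext G a) a.
Proof. apply d_el; right; reflexivity. Qed.

Lemma d_lift G a f : derives Ax G f -> derives Ax (ext G a) f.
Proof. intros H; eapply d_weak; [exact H|]; intros x Hx; left; exact Hx. Qed.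

Lemma compose G a b c : derives Ax G (Imp a b) -> derives Ax G (Imp b c) -> derives Ax G (Imp a c).
Proof.
  intros H1 H2; apply deduction.
  eapply d_mp'; [apply d_lift; exact H2|].
  eapply d_mp'; [apply d_lift; exact H1|apply d_hyp].
Qed.

Lemma or_elim G a b c : derives Ax G (Or a b) -> derives Ax G (Imp a c) -> derives Ax G (Imp b c) -> derives Ax G c.
Proof.
  intros H H1 H2. eapply d_mp'; [|exact H].
  eapply d_mp'; [|exact H2]. eapply d_mp'; [|exact H1]. apply d_base, IPC8.
Qed.

Lemma compactness G f : derives Ax G f -> exists l, (forall x, In x l -> G x) /\ derives Ax (inl l) f.
Proof.
  induction 1.
  - exists []; split; [intros x []|apply d_base; auto].
  - exists []; split; [intros x []|eapply d_ax; eauto].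
  - exists [f]; split; [intros x [<-|[]]; auto| apply d_el; left; auto].
  - destruct IHderives1 as [l1 [H1 D1]], IHderives2 as [l2 [H2 D2]].
    exists (l1 ++ l2); split.
    + intros x Hx; apply in_app_or in Hx; destruct Hx; auto.
    + eapply d_mp.
      * eapply d_weak; [exact D1|]; intros x Hx; apply in_or_app; left; exact Hx.
      * eapply d_weak; [exact D2|]; intros x Hx; apply in_or_app; right; exact Hx.
  - exists []; split; [intros x []|apply d_nec; auto].
Qed.

Definition theory (G : form -> Prop) := forall f, derives Ax G f -> G f.
Definition prime (G : form -> Prop) := theory G /\ forall a b, G (Or a b) -> G a \/ G b.

Lemma th_mp G a b : theory G -> G (Imp a b) -> G a -> G b.
Proof. intros T H1 H2; apply T; eapply d_mp'; apply d_el; eauto. Qed.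

Lemma th_thm G f : theory G -> derives Ax empty f -> G f.
Proof. intros T H; apply T, d_thm, H. Qed.

Lemma th_and G a b : theory G -> (G (And a b) <-> G a /\ G b).
Proof.
  intros T; split.
  - intros H; split; eapply th_mp; eauto; apply th_thm; auto; apply d_base; constructor.
  - intros [H1 H2]; eapply th_mp; [auto| |exact H2]; eapply th_mp; [auto| |exact H1].
    apply th_thm; auto; apply d_base; constructor.
Qed.

Lemma th_bot G f : theory G -> G Bot -> G f.
Proof. intros T H; eapply th_mp; eauto; apply th_thm; auto; apply d_base; constructor. Qed.

Lemma box_inv G g : theory G -> derives Ax (fun f => G (Box f)) g -> G (Box g).
Proof.
  intros T H. apply compactness in H as [l [Hl Hd]].
  revert g Hd. induction l as [|a l IH]; intros g Hd.
  - apply T, d_nec. eapply d_weak; [exact Hd|]; intros x [].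
  - assert (Hd' : derives Ax (inl l) (Imp a g)).
    { apply deduction. eapply d_weak; [exact Hd|]. intros x [<-|Hx]; [right; auto|left; exact Hx]. }
    assert (IH' := IH (fun x Hx => Hl x (or_intror Hx)) _ Hd').
    eapply th_mp; [exact T| |apply (Hl a); left; auto].
    eapply th_mp; [exact T| |exact IH']. apply th_thm; auto; apply d_base, KBox.
Qed.

Lemma nec_imp G a b : derives Ax empty (Imp a b) -> derives Ax G (Imp (Box a) (Box b)).
Proof. intros H; eapply d_mp'; [apply d_base, KBox|]. apply d_nec, H. Qed.

Lemma nec_dia G a b : derives Ax empty (Imp a b) -> derives Ax G (Imp (Dia a) (Dia b)).
Proof. intros H; eapply d_mp'; [apply d_base, KDia|]. apply d_nec, H. Qed.

Definition directed (T1 : form -> Prop) :=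
  (exists d, T1 d) /\ forall d1 d2, T1 d1 -> T1 d2 -> exists d, T1 d /\
     derives Ax empty (Imp d d1) /\ derives Ax empty (Imp d d2).

Lemma split_lemma T1 T2 g : directed T1 -> derives Ax (fun x => T1 x \/ T2 x) g ->
  exists d, T1 d /\ derives Ax T2 (Imp d g).
Proof.
  intros [[d0 Hd0] Hdir] H. apply compactness in H as [l [Hl Hd]].
  assert (Hd2 : derives Ax (fun x => In x l \/ T2 x) g).
  { eapply d_weak; [exact Hd|]; intros x Hx; left; exact Hx. }
  clear Hd. revert g Hd2. induction l as [|a l IH]; intros g Hd.
  - exists d0; split; auto. apply d_K. eapply d_weak; [exact Hd|]. intros x [[]|H]; auto.
  - assert (Hd' : derives Ax (fun x => In x l \/ T2 x) (Imp a g)).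
    { apply deduction. eapply d_weak; [exact Hd|]. intros x [[<-|Hx]|Hx]; [right; auto|left; left; auto|left; right; auto]. }
    destruct (IH (fun x Hx => Hl x (or_intror Hx)) _ Hd') as [d [Hd1 Hd2]].
    destruct (Hl a (or_introl eq_refl)) as [Ha|Ha].
    + destruct (Hdir d a Hd1 Ha) as [d' [H1 [H2 H3]]]. exists d'; split; auto.
      apply deduction. eapply d_mp'; [eapply d_mp'|].
      * apply d_lift; exact Hd2.
      * eapply d_mp'; [apply d_thm, H2|apply d_hyp].
      * eapply d_mp'; [apply d_thm, H3|apply d_hyp].
    + exists d; split; auto. apply deduction.
      eapply d_mp'; [eapply d_mp'; [apply d_lift; exact Hd2|apply d_hyp]|].
      apply d_el; left; exact Ha.
Qed.

Lemma directed_theory G : theory G -> directed G.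
Proof.
  intros T; split.
  - exists (Imp Bot Bot); apply th_thm; auto; apply d_base; constructor.
  - intros d1 d2 H1 H2. exists (And d1 d2); split; [apply th_and; auto|split; apply d_base; constructor].
Qed.

Lemma directed_dia Th : theory Th -> directed (fun x => exists t, Th t /\ x = Dia t).
Proof.
  intros T; split.
  - exists (Dia (Imp Bot Bot)); exists (Imp Bot Bot); split; auto. apply th_thm; auto; apply d_base; constructor.
  - intros d1 d2 [t1 [H1 ->]] [t2 [H2 ->]]. exists (Dia (And t1 t2)); split.
    + exists (And t1 t2); split; auto; apply th_and; auto.
    + split; apply nec_dia; apply d_base; constructor.
Qed.

Fixpoint disj (l : list form) : form :=
  match l with [] => Bot | d :: l => Or d (disj l) end.

Lemma disj_app1 G l1 l2 : derives Ax G (Imp (disj l1) (disj (l1 ++ l2))).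
Proof.
  induction l1 as [|a l1 IH]; simpl.
  - apply d_base; constructor.
  - apply deduction. eapply or_elim; [apply d_hyp| apply d_base, IPC6|].
    eapply compose; [apply d_lift; exact IH|apply d_base, IPC7].
Qed.

Lemma disj_app2 G l1 l2 : derives Ax G (Imp (disj l2) (disj (l1 ++ l2))).
Proof.
  induction l1 as [|a l1 IH]; simpl.
  - apply d_id.
  - eapply compose; [exact IH|apply d_base, IPC7].
Qed.

Lemma disj_single G l f : (forall d, In d l -> d = f) -> derives Ax G (Imp (disj l) f).
Proof.
  induction l as [|a l IH]; intros H; simpl.
  - apply d_base; constructor.
  - rewrite (H a (or_introl eq_refl)). apply deduction. eapply or_elim; [apply d_hyp|apply d_id|].
    apply d_lift, IH; intros; apply H; right; auto.
Qed.

Lemma prime_disj G l : prime G -> G (disj l) -> G Bot \/ exists d, In d l /\ G d.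
Proof.
  intros [T P]; induction l as [|a l IH]; simpl; intros H; auto.
  destruct (P _ _ H) as [H1|H1]; [right; exists a; auto|].
  destruct (IH H1) as [H2|[d [H2 H3]]]; auto. right; exists d; auto.
Qed.

End Hilbert.
Arguments d_weak {Ax}. Arguments d_thm {Ax}. Arguments d_mp' {Ax}. Arguments d_K {Ax}.
Arguments d_id {Ax}. Arguments deduction {Ax}. Arguments cut {Ax}. Arguments d_hyp {Ax}.
Arguments d_lift {Ax}. Arguments compose {Ax}. Arguments or_elim {Ax}. Arguments compactness {Ax}.
Arguments th_mp {Ax}. Arguments th_thm {Ax}. Arguments th_and {Ax}. Arguments th_bot {Ax}.
Arguments box_inv {Ax}. Arguments nec_imp {Ax}. Arguments nec_dia {Ax}. Arguments split_lemma {Ax}.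
Arguments directed_theory {Ax}. Arguments directed_dia {Ax}. Arguments disj_app1 {Ax}.
Arguments disj_app2 {Ax}. Arguments disj_single {Ax}. Arguments prime_disj {Ax}.
From Stdlib Require Import List Classical ClassicalEpsilon Lia Cantor.
Import ListNotations.

Fixpoint enc (f : form) : nat :=
  match f with
  | Var n => to_nat (0, n)
  | Bot => to_nat (1, 0)
  | And a b => to_nat (2, to_nat (enc a, enc b))
  | Or a b => to_nat (3, to_nat (enc a, enc b))
  | Imp a b => to_nat (4, to_nat (enc a, enc b))
  | Box a => to_nat (5, enc a)
  | Dia a => to_nat (6, enc a)
  end.

Lemma to_inj p q : to_nat p = to_nat q -> p = q.
Proof. intros H. rewrite <- (cancel_of_to p), <- (cancel_of_to q), H. reflexivity. Qed.

Local Arguments to_nat : simpl never.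
Lemma enc_inj f g : enc f = enc g -> f = g.
Proof.
  revert g; induction f; destruct g; simpl; intros H; apply to_inj in H; try discriminate;
  try (injection H as E); subst; auto;
  try (apply to_inj in E; injection E as E1 E2; f_equal; auto);
  f_equal; auto.
Qed.

Definition enum (n : nat) : form := epsilon (inhabits Bot) (fun f => enc f = n).

Lemma enum_enc f : enum (enc f) = f.
Proof.
  apply enc_inj. unfold enum. apply (epsilon_spec (inhabits Bot) (fun g => enc g = enc f)).
  exists f; reflexivity.
Qed.

Section Lind.
Variable Ax : axname -> Prop.
Variables (T D : form -> Prop).

Definition Good (S : form -> Prop) := forall ds, (forall d, In d ds -> D d) -> ds <> [] ->
  ~ derives Ax S (disj ds).

Fixpoint Tn (n : nat) : form -> Prop :=
  match n with
  | 0 => T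
  | S n => fun f => Tn n f \/ (f = enum n /\ Good (ext (Tn n) (enum n)))
  end.

Lemma Tn_mono m n f : m <= n -> Tn m f -> Tn n f.
Proof. induction 1; simpl; auto. Qed.

Lemma Good_anti S S' : (forall x, S x -> S' x) -> Good S' -> Good S.
Proof. intros H G ds H1 H2 H3. apply (G ds H1 H2). eapply d_weak; eauto. Qed.

Hypothesis GT : Good T.

Lemma Tn_good n : Good (Tn n).
Proof.
  induction n; simpl; auto.
  destruct (classic (Good (ext (Tn n) (enum n)))) as [H|H].
  - eapply Good_anti; [|exact H]. intros x [Hx|[-> _]]; [left; auto|right; auto].
  - eapply Good_anti; [|exact IHn]. intros x [Hx|[_ Hx]]; [auto|contradiction].
Qed.

Definition Delta f := exists n, Tn n f.

Lemma list_in_Tn l : (forall x, In x l -> Delta x) -> exists N, forall x, In x l -> Tn N x.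
Proof.
  induction l as [|a l IH]; intros H.
  - exists 0; intros x [].
  - destruct (H a (or_introl eq_refl)) as [n Hn].
    destruct IH as [N HN]; [intros; apply H; right; auto|].
    exists (n + N); intros x [<-|Hx].
    + eapply Tn_mono; [|exact Hn]; lia.
    + eapply Tn_mono; [|apply HN; exact Hx]; lia.
Qed.

Lemma not_good_step k : ~ Tn (S k) (enum k) -> exists ds, (forall d, In d ds -> D d) /\ ds <> [] /\
   derives Ax (ext (Tn k) (enum k)) (disj ds).
Proof.
  intros H. destruct (classic (Good (ext (Tn k) (enum k)))) as [G|G].
  - exfalso; apply H; simpl; right; auto.
  - apply NNPP; intros C; apply G; intros ds H1 H2 H3; apply C; exists ds; auto.
Qed.

Lemma Delta_theory : theory Ax Delta.
Proof.
  intros f Hf. apply compactness in Hf as [l [Hl Hd]].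
  destruct (list_in_Tn l Hl) as [N HN].
  apply NNPP; intros C.
  assert (C' : ~ Tn (S (enc f)) (enum (enc f))) by (intros H; apply C; exists (S (enc f)); rewrite enum_enc in H; auto).
  destruct (not_good_step _ C') as [ds [H1 [H2 H3]]]. rewrite enum_enc in H3.
  apply (Tn_good (N + enc f) ds H1 H2).
  eapply cut.
  - eapply d_weak; [exact Hd|]. intros x Hx; eapply Tn_mono; [|apply HN; exact Hx]; lia.
  - eapply d_weak; [exact H3|]. intros x [Hx|Hx]; [left; eapply Tn_mono; [|exact Hx]; lia|right; auto].
Qed.

Lemma Delta_prime : prime Ax Delta.
Proof.
  split; [exact Delta_theory|].
  intros a b [m Hm]. apply NNPP; intros C.
  assert (Ca : ~ Tn (S (enc a)) (enum (enc a))) by (intros H; apply C; left; exists (S (enc a)); rewrite enum_enc in H; auto).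
  assert (Cb : ~ Tn (S (enc b)) (enum (enc b))) by (intros H; apply C; right; exists (S (enc b)); rewrite enum_enc in H; auto).
  destruct (not_good_step _ Ca) as [ds1 [H1 [H2 H3]]]. rewrite enum_enc in H3.
  destruct (not_good_step _ Cb) as [ds2 [H4 [H5 H6]]]. rewrite enum_enc in H6.
  set (N := m + enc a + enc b).
  apply (Tn_good N (ds1 ++ ds2)).
  - intros d Hd; apply in_app_or in Hd; destruct Hd; auto.
  - destruct ds1; [congruence|discriminate].
  - eapply or_elim.
    + apply d_el; eapply Tn_mono; [|exact Hm]; unfold N; lia.
    + eapply compose; [|apply disj_app1]. apply deduction.
      eapply d_weak; [exact H3|]. intros x [Hx|Hx]; [left; eapply Tn_mono; [|exact Hx]; unfold N; lia|right; auto].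
    + eapply compose; [|apply disj_app2]. apply deduction.
      eapply d_weak; [exact H6|]. intros x [Hx|Hx]; [left; eapply Tn_mono; [|exact Hx]; unfold N; lia|right; auto].
Qed.

Lemma Delta_avoid d : D d -> ~ Delta d.
Proof.
  intros Hd [n Hn]. apply (Tn_good n [d]); [intros x [<-|[]]; auto|discriminate|].
  eapply d_mp'; [apply d_base, IPC6|apply d_el; exact Hn].
Qed.

End Lind.

Lemma lindenbaum Ax T D : Good Ax D T ->
  exists Dl, prime Ax Dl /\ (forall f, T f -> Dl f) /\ (forall d, D d -> ~ Dl d).
Proof.
  intros G. exists (Delta Ax T D); split; [apply Delta_prime; auto|split].
  - intros f Hf; exists 0; exact Hf.
  - apply Delta_avoid; auto.
Qed.
From Stdlib Require Import Classical.

Lemma forces_e F V f : forces F V (e F) f.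
Proof.
  induction f; simpl; auto.
  - apply val_e.
  - intros y Hy _. apply e_max in Hy; subst; auto.
  - intros y z Hy Hz. apply e_max in Hy; subst. apply R_e in Hz; subst; auto.
  - intros y Hy. apply e_max in Hy; subst. exists (e F); split; auto. apply R_e; auto.
Qed.

Lemma forces_up F V f x y : le F x y -> forces F V x f -> forces F V y f.
Proof.
  revert x y; induction f; simpl; intros x y Hxy H.
  - eapply val_up; eauto.
  - subst. apply e_max; auto.
  - destruct H; split; eauto.
  - destruct H; [left|right]; eauto.
  - intros z Hz; apply H; eapply le_trans; eauto.
  - intros z w Hz; apply H; eapply le_trans; eauto.
  - intros z Hz; apply H; eapply le_trans; eauto.
Qed.

Lemma sound_base F V f x : base_axiom f -> forces F V x f.
Proof.
  destruct 1; simpl.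
  - intros y Hy Hp z Hz Hq. eapply forces_up; eauto.
  - intros y Hy H1 z Hz H2 w Hw H3.
    assert (Hq : forces F V w q) by (apply (H2 w Hw H3 w (le_refl _ _) H3) || (apply H2; auto)).
    eapply (H1 w); [eapply le_trans; eauto|exact H3|apply le_refl|exact Hq].
  - intros y _ [H _]; auto.
  - intros y _ [_ H]; auto.
  - intros y Hy H1 z Hz H2; split; auto. eapply forces_up; eauto.
  - intros y _ H; auto.
  - intros y _ H; auto.
  - intros y Hy H1 z Hz H2 w Hw [H3|H3].
    + apply (H1 w); auto. eapply le_trans; eauto.
    + apply (H2 w); auto.
  - intros y Hy H; subst. apply forces_e.
  - intros y Hy H1 z Hz H2 w v Hw Hv.
    apply (H1 w v); [eapply le_trans; eauto|auto|apply le_refl|]. apply (H2 w v); auto.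
  - intros y Hy H1 z Hz H2 w Hw.
    destruct (H2 w Hw) as [v [Hv Hp]]. exists v; split; auto.
    apply (H1 w v); [eapply le_trans; eauto|auto|apply le_refl|auto].
Qed.

Lemma sound_ax F V a f x : corr a F -> ax_instance a f -> forces F V x f.
Proof.
  destruct a; simpl; intros HC HI.
  - subst; simpl. intros y Hy H. apply HC. intros y' Hy'.
    destruct (H y' Hy') as [z [Hz ->]]; auto.
  - destruct HI as [p [q ->]]; simpl. intros y Hy H.
    destruct (classic (forces F V y (Dia p))) as [Hp|Hp]; [left; auto|].
    destruct (classic (forces F V y (Dia q))) as [Hq|Hq]; [right; auto|].
    exfalso. simpl in Hp, Hq.
    apply not_all_ex_not in Hp as [y1 Hp]. apply imply_to_and in Hp as [Hy1 Hp].
    apply not_all_ex_not in Hq as [y2 Hq]. apply imply_to_and in Hq as [Hy2 Hq].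
    assert (N1 : ~ R F y1 (e F)) by (intros C; apply Hp; exists (e F); split; auto; apply forces_e).
    assert (N2 : ~ R F y2 (e F)) by (intros C; apply Hq; exists (e F); split; auto; apply forces_e).
    destruct (HC y y1 y2 N1 N2 Hy1 Hy2) as [w [Hw [S1 S2]]].
    destruct (H w Hw) as [z [Hz [Hz'|Hz']]].
    + destruct (S1 z Hz) as [t [Ht Hzt]]. apply Hp; exists t; split; auto. eapply forces_up; eauto.
    + destruct (S2 z Hz) as [t [Ht Hzt]]. apply Hq; exists t; split; auto. eapply forces_up; eauto.
  - destruct HI as [p [q ->]]; simpl. intros y Hy H y1 z Hy1 Hz z' Hz' Hp.
    destruct (classic (z' = e F)) as [E|E]; [subst; apply forces_e|].
    destruct (HC y1 z z' Hz Hz' E) as [u [w [Hu [Huw [Hwz Hs]]]]].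
    assert (Hd : forces F V u (Dia p)).
    { simpl. intros s Hs'. destruct (Hs s Hs') as [Hse|[t [Ht Hzt]]].
      - exists (e F); split; auto; apply forces_e.
      - exists t; split; auto. eapply forces_up; eauto. }
    assert (Hb : forces F V u (Box q)).
    { simpl. apply (H u); auto. eapply le_trans; eauto. }
    simpl in Hb. eapply forces_up; [exact Hwz|]. apply (Hb u w); auto. apply le_refl.
Qed.

Lemma soundness Ax G f : derives Ax G f -> sem_cons (frame_class Ax) G f.
Proof.
  induction 1; intros F V x HF HG.
  - apply sound_base; auto.
  - eapply sound_ax; eauto.
  - auto.
  - specialize (IHderives1 F V x HF HG). specialize (IHderives2 F V x HF HG).
    simpl in IHderives2. apply (IHderives2 x); auto. apply le_refl.
  - simpl; intros y z _ _. apply IHderives; auto. intros g [].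
Qed.
From Stdlib Require Import List Classical.
Import ListNotations.

Section Canon.
Variable Ax : axname -> Prop.

Definition full : form -> Prop := fun _ => True.

Definition succ (G Dd Dl : form -> Prop) : Prop :=
  prime Ax Dl /\ (forall f, G (Box f) -> Dl f) /\ (forall d, Dd d -> ~ Dl d).

Record cw := CW {
  cG : form -> Prop;
  cD : form -> Prop;
  cprime : prime Ax cG;
  ccons : ~ cG Bot;
  cdia : forall p, cG (Dia p) -> exists Dl, succ cG cD Dl /\ Dl p
}.

Definition cle (x y : option cw) : Prop :=
  match x, y with
  | _, None => True
  | None, Some _ => False
  | Some a, Some b => forall f, cG a f -> cG b f
  end.

Definition cR (x y : option cw) : Prop :=
  match x, y with
  | None, y => y = None
  | Some a, None => succ (cG a) (cD a) full
  | Some a, Some b => succ (cG a) (cD a) (cG b)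
  end.

Lemma cle_refl x : cle x x.
Proof. destruct x; simpl; auto. Qed.

Lemma cle_trans x y z : cle x y -> cle y z -> cle x z.
Proof. destruct x, y, z; simpl; auto. tauto. Qed.

Lemma ce_max y : cle None y -> y = None.
Proof. destruct y; simpl; tauto. Qed.

Lemma cR_e x : cR None x <-> x = None.
Proof. simpl; tauto. Qed.

Definition CF : frame := Frame (option cw) cle None cR cle_refl cle_trans ce_max cR_e.

Definition th (w : option cw) (f : form) : Prop :=
  match w with None => True | Some a => cG a f end.

Lemma th_up x y f : cle x y -> th x f -> th y f.
Proof. destruct x, y; simpl; auto. tauto. Qed.

Definition CV : valuation CF :=
  Valuation CF (fun p w => th w (Var p)) (fun p x y H => th_up x y (Var p) H) (fun p => I).

Lemma prime_full : prime Ax full.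
Proof. split; [intros f _; exact I|intros a b _; left; exact I]. Qed.

Lemma full_of G : prime Ax G -> G Bot -> forall f, G f.
Proof. intros [T _] H f; exact (th_bot _ _ T H). Qed.

Lemma succ_full G Dd Dl : prime Ax Dl -> Dl Bot -> (succ G Dd Dl <-> succ G Dd full).
Proof.
  intros P B. pose proof (full_of _ P B) as F. unfold succ; split.
  - intros [_ [_ H]]; split; [apply prime_full|split; [intros; exact I|]].
    intros d Hd _; apply (H d Hd (F d)).
  - intros [_ [_ H]]; split; [auto|split; [intros; apply F|]].
    intros d Hd _; apply (H d Hd I).
Qed.

Lemma worldof Dl : prime Ax Dl -> exists w : option cw,
  (forall f, th w f <-> Dl f) /\ (forall a, cR (Some a) w <-> succ (cG a) (cD a) Dl) /\
  (forall a, cle (Some a) w <-> forall f, cG a f -> Dl f).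
Proof.
  intros P. destruct (classic (Dl Bot)) as [B|B].
  - pose proof (full_of _ P B) as F. exists None; simpl; split; [|split].
    + intros f; split; auto.
    + intros a; symmetry; apply succ_full; auto.
    + intros a; split; auto.
  - unshelve eexists (Some (CW Dl (fun _ => False) P B _)).
    + intros p _. exists full; split; [|exact I]. split; [apply prime_full|split; [intros; exact I|]].
      intros d [].
    + simpl; split; [|split]; intros; tauto.
Qed.

Definition GoodW (G Dd : form -> Prop) :=
  forall ds, (forall d, In d ds -> Dd d) -> ds <> [] -> ~ G (Dia (disj ds)).

Lemma mkw G Dd : prime Ax G -> ~ G Bot -> GoodW G Dd -> exists w : cw, cG w = G /\ cD w = Dd.
Proof.
  intros P B Gd. unshelve eexists (CW G Dd P B _); [|split; reflexivity].
  intros p Hp. destruct P as [T P'].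
  destruct (lindenbaum Ax (ext (fun f => G (Box f)) p) Dd) as [Dl [H1 [H2 H3]]].
  - intros ds Hds Hne Hd. apply (Gd ds Hds Hne).
    apply deduction in Hd. apply (box_inv (Ax:=Ax)) in Hd; auto.
    eapply (th_mp (Ax:=Ax)); [exact T| |exact Hp]. eapply (th_mp (Ax:=Ax)); [exact T| |exact Hd].
    apply (th_thm (Ax:=Ax)); auto; apply d_base, KDia.
  - exists Dl; split; [split; [auto|split]|].
    + intros f Hf; apply H2; left; auto.
    + auto.
    + apply H2; right; auto.
Qed.

Lemma truth f : forall w, forces CF CV w f <-> th w f.
Proof.
  induction f; intros [a|].
  all: try (split; intros _; [exact I| exact (forces_e CF CV _)]).
  - simpl; tauto.
  - simpl; split; [discriminate|intros H; exfalso; apply (ccons a H)].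
  - simpl. rewrite IHf1, IHf2. simpl. symmetry; apply (th_and (Ax:=Ax)), (cprime a).
  - simpl. rewrite IHf1, IHf2. simpl. split.
    + assert (T := proj1 (cprime a)).
      intros [H|H]; [apply (th_mp _ f1 _ T)|apply (th_mp _ f2 _ T)]; auto; apply (th_thm _ _ T); apply d_base; constructor.
    + apply (cprime a).
  -
    split.
    + intros H. apply NNPP; intros C.
      destruct (lindenbaum Ax (ext (cG a) f1) (fun x => x = f2)) as [Dl [P [H2 H3]]].
      * intros ds Hds Hne Hd. apply C. simpl. apply (cprime a). apply deduction.
        eapply d_mp'; [apply disj_single; exact Hds|exact Hd].
      * destruct (worldof Dl P) as [w [W1 [_ W3]]].
        assert (Hle : cle (Some a) w) by (apply W3; intros; apply H2; left; auto).
        assert (Hf1 : forces CF CV w f1) by (apply IHf1, W1, H2; right; auto).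
        specialize (H w Hle Hf1). apply IHf2, W1 in H. apply (H3 f2 eq_refl H).
    + intros H y Hy Hf1. apply IHf2. apply IHf1 in Hf1. destruct y as [b|]; simpl in *; auto.
      eapply (th_mp (Ax:=Ax)); [apply (cprime b)|apply Hy; exact H|exact Hf1].
  -
    split.
    + intros H. apply NNPP; intros C.
      destruct (lindenbaum Ax (fun x => cG a (Box x)) (fun x => x = f)) as [Dl [P [H2 H3]]].
      * intros ds Hds Hne Hd. apply C. simpl. apply (box_inv (Ax:=Ax)); [apply (cprime a)|].
        eapply d_mp'; [apply disj_single; exact Hds|exact Hd].
      * destruct (mkw (cG a) (fun _ => False) (cprime a) (ccons a)) as [a' [E1 E2]].
        { intros [|d ds] Hds Hne; [congruence|]. destruct (Hds d (or_introl eq_refl)). }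
        destruct (worldof Dl P) as [w [W1 [W2 _]]].
        assert (Hle : cle (Some a) (Some a')) by (simpl; rewrite E1; auto).
        assert (HR : cR (Some a') w) by (apply W2; rewrite E1, E2; split; [auto|split; [auto|intros d []]]).
        specialize (H _ w Hle HR). apply IHf, W1 in H. apply (H3 f eq_refl H).
    + intros H y z Hy Hz. apply IHf. destruct y as [b|].
      * destruct z as [c|]; simpl in *; auto. apply Hz. apply Hy; exact H.
      * simpl in Hz; subst; exact I.
  -
    split.
    + intros H. apply NNPP; intros C.
      destruct (mkw (cG a) (fun x => x = f) (cprime a) (ccons a)) as [a' [E1 E2]].
      { intros ds Hds Hne Hd. apply C. simpl. eapply (th_mp (Ax:=Ax)); [apply (cprime a)| |exact Hd].
        apply (th_thm (Ax:=Ax)); [apply (cprime a)|]. apply nec_dia. apply disj_single; auto. }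
      assert (Hle : cle (Some a) (Some a')) by (simpl; rewrite E1; auto).
      destruct (H _ Hle) as [[c|] [Hz Hf]]; simpl in Hz.
      * apply IHf in Hf. simpl in Hf. destruct Hz as [_ [_ Hz]]. rewrite E2 in Hz. apply (Hz f eq_refl Hf).
      * destruct Hz as [_ [_ Hz]]. rewrite E2 in Hz. apply (Hz f eq_refl I).
    + intros H y Hy. destruct y as [b|].
      * simpl in Hy. destruct (cdia b f (Hy _ H)) as [Dl [Hs Hf]].
        destruct (worldof Dl (proj1 Hs)) as [w [W1 [W2 _]]].
        exists w; split; [apply W2; exact Hs|apply IHf, W1, Hf].
      * exists None; split; [reflexivity|apply forces_e].
Qed.

End Canon.
From Stdlib Require Import List Classical.
Import ListNotations.

Section Frame.
Variable Ax : axname -> Prop.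

Lemma world_good (b : cw Ax) : GoodW (cG Ax b) (cD Ax b).
Proof.
  intros ds Hds Hne Hd. destruct (cdia Ax b _ Hd) as [Dl [[P [_ Av]] HD]].
  destruct (prime_disj _ _ P HD) as [B|[d [Hin Hdl]]].
  - destruct ds as [|d ds]; [congruence|]. apply (Av d (Hds d (or_introl eq_refl))).
    exact (full_of Ax _ P B d).
  - apply (Av d (Hds d Hin) Hdl).
Qed.

Definition E (G Dd : form -> Prop) (x : form) : Prop :=
  exists ds, (forall d, In d ds -> Dd d) /\ ds <> [] /\ derives Ax (fun f => G (Box f)) (Imp x (disj ds)).

Lemma bad_E (b : cw Ax) x : E (cG Ax b) (cD Ax b) x -> ~ cG Ax b (Dia x).
Proof.
  intros [ds [H1 [H2 H3]]] H. pose proof (cprime Ax b) as [T _].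
  apply (world_good b ds H1 H2).
  apply (box_inv _ _ T) in H3.
  eapply (th_mp _ _ _ T); [|exact H]. eapply (th_mp _ _ _ T); [|exact H3].
  apply (th_thm _ _ T); apply d_base, KDia.
Qed.

Lemma E_self (b : cw Ax) d : cD Ax b d -> E (cG Ax b) (cD Ax b) d.
Proof. intros H; exists [d]; split; [intros x [<-|[]]; auto|split; [discriminate|apply d_base, IPC6]]. Qed.

Lemma noRe (b : cw Ax) : ~ cR Ax (Some b) None -> exists d, cD Ax b d.
Proof.
  intros H. apply NNPP; intros C. apply H. simpl. split; [apply prime_full|split; [intros; exact I|]].
  intros d Hd _; apply C; exists d; auto.
Qed.

Lemma noDiaBot (b : cw Ax) : ~ cR Ax (Some b) None -> ~ cG Ax b (Dia Bot).
Proof.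
  intros H HB. destruct (cdia Ax b _ HB) as [Dl [Hs HD]]. apply H. simpl.
  apply (succ_full Ax _ _ _ (proj1 Hs) HD); auto.
Qed.

Lemma sub_down (a' b : cw Ax) : (forall x, E (cG Ax b) (cD Ax b) x -> cD Ax a' x) ->
  ~ cR Ax (Some b) None -> R_sub_down (CF Ax) (Some a') (Some b).
Proof.
  intros HE Hb v Hv. destruct v as [u|].
  - simpl in Hv. destruct Hv as [_ [_ Av]].
    destruct (lindenbaum Ax (fun x => cG Ax u x \/ cG Ax b (Box x)) (cD Ax b)) as [Th [P [H1 H2]]].
    + intros ds Hds Hne Hd.
      destruct (split_lemma _ _ _ (directed_theory _ (proj1 (cprime Ax u))) Hd) as [dl [Hdl Hder]].
      apply (Av dl); [apply HE; exists ds; auto|exact Hdl].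
    + destruct (worldof Ax Th P) as [t [_ [W2 W3]]]. exists t; split.
      * apply W2. split; [auto|split]; [intros f Hf; apply H1; right; auto|auto].
      * apply W3. intros f Hf; apply H1; left; auto.
  - exfalso. simpl in Hv. destruct Hv as [_ [_ Av]]. destruct (noRe b Hb) as [d Hd].
    apply (Av d); [apply HE, E_self, Hd|exact I].
Qed.

Lemma dia_disj G ds : Ax AxC -> prime Ax G -> G (Dia (disj ds)) -> G (Dia Bot) \/ exists d, In d ds /\ G (Dia d).
Proof.
  intros HC [T P]. induction ds as [|d ds IH]; simpl; intros H; auto.
  assert (H' : G (Or (Dia d) (Dia (disj ds)))).
  { eapply (th_mp _ _ _ T); [|exact H]. apply T. eapply d_ax; [exact HC|]. simpl; eauto. }
  destruct (P _ _ H') as [H1|H1]; [right; exists d; auto|].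
  destruct (IH H1) as [H2|[d' [H2 H3]]]; auto. right; exists d'; auto.
Qed.

Lemma canon_C : Ax AxC -> C_corr (CF Ax).
Proof.
  intros HC x y z Hy Hz Hxy Hxz.
  destruct y as [b|]; [|exfalso; apply Hy; reflexivity].
  destruct z as [c|]; [|exfalso; apply Hz; reflexivity].
  destruct x as [a|]; [|destruct Hxy].
  simpl in Hxy, Hxz.
  set (Dw := fun x => E (cG Ax b) (cD Ax b) x \/ E (cG Ax c) (cD Ax c) x).
  destruct (mkw Ax (cG Ax a) Dw (cprime Ax a) (ccons Ax a)) as [a' [E1 E2]].
  - intros ds Hds Hne Hd. destruct (dia_disj _ ds HC (cprime Ax a) Hd) as [B|[d [Hin Hdd]]].
    + apply (noDiaBot b Hy); auto.
    + destruct (Hds d Hin) as [He|He].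
      * apply (bad_E b d He); auto.
      * apply (bad_E c d He); auto.
  - exists (Some a'); split; [simpl; rewrite E1; auto|split].
    + apply sub_down; auto. intros x Hx; rewrite E2; left; auto.
    + apply sub_down; auto. intros x Hx; rewrite E2; right; auto.
Qed.

Lemma canon_N : Ax AxN -> N_corr (CF Ax).
Proof.
  intros HN x Hx. destruct x as [a|]; [exfalso|reflexivity].
  destruct (mkw Ax (cG Ax a) (fun x => x = Bot) (cprime Ax a) (ccons Ax a)) as [a' [E1 E2]].
  - intros ds Hds Hne Hd. pose proof (cprime Ax a) as [T _]. apply (ccons Ax a).
    eapply (th_mp _ _ _ T); [apply T; eapply d_ax; [exact HN|reflexivity]|].
    eapply (th_mp _ _ _ T); [|exact Hd]. apply (th_thm _ _ T). apply nec_dia, disj_single; auto.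
  - assert (H := Hx (Some a')). simpl in H. rewrite E1, E2 in H. specialize (H (fun f h => h)).
    destruct H as [_ [_ Av]]. apply (Av Bot eq_refl I).
Qed.

Lemma boxes (Th : form -> Prop) : prime Ax Th -> ~ Th Bot -> forall ds,
  (forall d, In d ds -> exists x, d = Box x /\ ~ Th x) ->
  exists x, ~ Th x /\ derives Ax empty (Imp (disj ds) (Box x)).
Proof.
  intros [T P] B. induction ds as [|d ds IH]; intros H; simpl.
  - exists Bot; split; auto. apply d_base; constructor.
  - destruct (H d (or_introl eq_refl)) as [x1 [-> N1]].
    destruct IH as [x2 [N2 D2]]; [intros; apply H; right; auto|].
    exists (Or x1 x2); split; [intros C; destruct (P _ _ C); auto|].
    apply deduction. eapply or_elim; [apply d_hyp| |].
    + apply nec_imp, d_base, IPC6.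
    + apply d_thm. eapply compose; [exact D2|apply nec_imp, d_base, IPC7].
Qed.

Lemma canon_I : Ax AxI -> I_corr (CF Ax).
Proof.
  intros HI x y z Hxy Hyz Hz.
  destruct z as [c|]; [|exfalso; apply Hz; reflexivity].
  destruct x as [a|]; [|simpl in Hxy; subst; destruct Hyz].
  destruct y as [b|]; [|destruct Hyz].
  simpl in Hxy, Hyz. destruct Hxy as [_ [Hbox _]].
  pose proof (cprime Ax c) as Pc. pose proof (cprime Ax a) as [Ta _].
  destruct (lindenbaum Ax (fun x => (exists t, cG Ax c t /\ x = Dia t) \/ cG Ax a x)
              (fun x => exists y, x = Box y /\ ~ cG Ax c y)) as [Gu [Pu [H1 H2]]].
  - intros ds Hds Hne Hd.
    destruct (boxes _ Pc (ccons Ax c) ds Hds) as [x [Nx Dx]].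
    assert (Hd' := d_mp' _ _ _ (d_thm _ _ Dx) Hd).
    destruct (split_lemma _ _ _ (directed_dia _ (proj1 Pc)) Hd') as [dl [[t [Ht ->]] Hder]].
    apply Ta in Hder. apply Nx.
    assert (Hb : cG Ax a (Box (Imp t x))).
    { eapply (th_mp _ _ _ Ta); [|exact Hder]. apply Ta. eapply d_ax; [exact HI|]. simpl; eauto. }
    apply Hbox, Hyz in Hb. eapply (th_mp _ _ _ (proj1 Pc)); eauto.
  - assert (Bu : ~ Gu Bot).
    { intros B. apply (H2 (Box Bot)); [exists Bot; split; auto; apply ccons|exact (full_of Ax _ Pu B _)]. }
    destruct (mkw Ax Gu (fun _ => False) Pu Bu) as [u' [E1 E2]].
    { intros [|d ds] Hds Hne; [congruence|]. destruct (Hds d (or_introl eq_refl)). }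
    exists (Some u'), (Some c). split; [|split; [|split]].
    + simpl; rewrite E1; intros f Hf; apply H1; right; auto.
    + simpl; rewrite E1, E2. split; [auto|split; [|intros d []]].
      intros f Hf. apply NNPP; intros C. apply (H2 (Box f)); auto. exists f; auto.
    + apply cle_refl.
    + intros [s|] Hs; [right|left; reflexivity].
      simpl in Hs. rewrite E1 in Hs.
      pose proof (cprime Ax s) as [Ts _].
      destruct (lindenbaum Ax (fun x => cG Ax c x \/ cG Ax s (Box x)) (cD Ax s)) as [Th [P [K1 K2]]].
      * intros ds Hds Hne Hd.
        destruct (split_lemma _ _ _ (directed_theory _ (proj1 Pc)) Hd) as [t [Ht Hder]].
        apply (box_inv _ _ Ts) in Hder.
        apply (world_good s ds Hds Hne).
        assert (Hdt : cG Ax s (Dia t)) by (apply Hs, H1; left; exists t; auto).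
        eapply (th_mp _ _ _ Ts); [|exact Hdt]. eapply (th_mp _ _ _ Ts); [|exact Hder].
        apply (th_thm _ _ Ts); apply d_base, KDia.
      * destruct (worldof Ax Th P) as [t [_ [W2 W3]]]. exists t; split.
        -- apply W2. split; [auto|split]; [intros f Hf; apply K1; right; auto|auto].
        -- apply W3. intros f Hf; apply K1; left; auto.
Qed.

Lemma canon_class : frame_class Ax (CF Ax).
Proof.
  intros [| |] H; simpl; [apply canon_N|apply canon_C|apply canon_I]; auto.
Qed.

End Frame.

Theorem mainTheorem10 (Ax : axname -> Prop) (Gamma : form -> Prop) (phi : form) :
  derives Ax Gamma phi <-> sem_cons (frame_class Ax) Gamma phi.
Proof.
  split; [apply soundness|].
  intros H. apply NNPP; intros C.
  destruct (lindenbaum Ax Gamma (fun x => x = phi)) as [Dl [P [H1 H2]]].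
  - intros ds Hds Hne Hd. apply C. eapply d_mp'; [apply disj_single; exact Hds|exact Hd].
  - destruct (worldof Ax Dl P) as [w [W1 _]].
    assert (Hf : forces (CF Ax) (CV Ax) w phi).
    { apply H; [apply canon_class|]. intros g Hg. apply truth, W1, H1, Hg. }
    apply truth, W1 in Hf. apply (H2 phi eq_refl Hf).
Qed.
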